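(* Let $A\in\mathbb R^{m\times n}$, $B\in\mathbb R^{d\times n}$ with $m\ge n$, $d\ge n$, and $B$ of full column rank $n$. Let $A=U\Gamma Y^T$, $B=V\Sigma Y^T$ be a reduced GSVD of $(A,B)$ as in the context, and let $1\le k<n$ with $\gamma_1/\sigma_1>\gamma_2/\sigma_2>\dots>\gamma_k/\sigma_k>\gamma_{k+1}/\sigma_{k+1}$. Define $s_A=\mathrm{DEIM}(U_k)$, $s_B=\mathrm{DEIM}(V_k)$, $p=\mathrm{DEIM}(Y_k)$, where $U_k,V_k,Y_k$ are the first $k$ columns of $U,V,Y$. (i) Let $G=AB^{+}$ (which equals $AB^{-1}$ when $B$ is square). Then $\sigma_i>0$ for all $i$, $G=U(\Gamma\Sigma^{-1})V^T$ is a (reduced) singular value decomposition of $G$, and if $W_k$ and $Z_k$ denote any matrices of $k$ dominant left and right singular vectors of $G$, then $\mathrm{DEIM}(W_k)=s_A$ and $\mathrm{DEIM}(Z_k)=s_B$. (ii) If $d=n$ and $B=I_n$, then, with $W_k$ and $Z_k$ any matrices of $k$ dominant left and right singular vectors of $A$, $\mathrm{DEIM}(W_k)=s_A$ and $\mathrm{DEIM}(Z_k)=p$; consequently the factors $C=AP$ and $R=S_A^TA$ (with $P=I_n(:,p)$, $S_A=I_m(:,s_A)$) of the GCUR of $A$ coincide with those of the DEIM-CUR decomposition of $A$.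
   Context: Reduced GSVD: $U\in\mathbb R^{m\times n}$, $V\in\mathbb R^{d\times n}$ have orthonormal columns, $Y\in\mathbb R^{n\times n}$ is nonsingular, $\Gamma=\mathrm{diag}(\gamma_i)$, $\Sigma=\mathrm{diag}(\sigma_i)$ with $\gamma_i,\sigma_i\in[0,1]$, $\gamma_i^2+\sigma_i^2=1$, ordered so that $\gamma_i/\sigma_i$ is nonincreasing, and $A=U\Gamma Y^T$, $B=V\Sigma Y^T$. $B^+$ is the Moore–Penrose pseudoinverse. DEIM index selection: for a matrix $X=[\mathbf x_1,\dots,\mathbf x_k]\in\mathbb R^{N\times k}$ with linearly independent columns, $\mathrm{DEIM}(X)=(s_1,\dots,s_k)$ is defined by: $s_1$ is the smallest index $i$ maximizing $|\mathbf x_1(i)|$; for $j=2,\dots,k$, with $X_{j-1}=[\mathbf x_1,\dots,\mathbf x_{j-1}]$ and $S_{j-1}=I_N(:,(s_1,\dots,s_{j-1}))$, set $\mathbf r_j=\mathbf x_j-X_{j-1}(S_{j-1}^TX_{j-1})^{-1}S_{j-1}^T\mathbf x_j$ and let $s_j$ be the smallest index $i$ maximizing $|\mathbf r_j(i)|$. (Here $I_N(:,s)$ is the matrix of columns of the identity indexed by $s$.) The DEIM-CUR decomposition of a matrix $A$ uses row indices $\mathrm{DEIM}(W_k)$ and column indices $\mathrm{DEIM}(Z_k)$ for the dominant left/right singular vectors $W_k,Z_k$; the GCUR of $(A,B)$ uses column indices $p$ for both $A$ and $B$, row indices $s_A$ for $A$ and $s_B$ for $B$. *)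

(* Defs.v *)
From mathcomp Require Import all_boot all_order all_algebra.
From mathcomp Require Import reals.
Set Implicit Arguments. Unset Strict Implicit. Unset Printing Implicit Defensive.
Import Order.TTheory GRing.Theory Num.Theory.
Local Open Scope ring_scope.

Section Defs.
Variable R : realType.

(* entry (r, c) of X, with c given as a natural number (0 outside range) *)
Definition xentry N M (X : 'M[R]_(N, M)) (r : 'I_N) (c : nat) : R :=
  oapp (X r) 0 (insub c).

(* X(:, 1:k) : the first k columns of X (0-based columns 0..k-1) *)
Definition first_cols N M (k : nat) (X : 'M[R]_(N, M)) : 'M[R]_(N, k) :=
  \matrix_(r < N, c < k) xentry X r c.

(* I_N(:, s) for an index sequence s (0-based), with k columns *)
Definition selmx N k (s : seq nat) : 'M[R]_(N, k) :=
  \matrix_(r < N, c < k) ((nat_of_ord r == nth 0%N s c)%:R).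

Definition first_argmax N (v : 'cV[R]_N) : nat :=
  find (fun i : 'I_N => [forall j : 'I_N, `|v j 0| <= `|v i 0|]) (enum 'I_N).

(* residual r_{j+1} = x_{j+1} - X_j (S_j^T X_j)^{-1} S_j^T x_{j+1}
   (0-based: j already selected indices s, next column is column j) *)
Definition deim_residual N M (X : 'M[R]_(N, M)) (s : seq nat) (j : nat)
  : 'cV[R]_N :=
  let x : 'cV[R]_N := \matrix_(r < N, c < 1) xentry X r j in
  let Xj := first_cols j X in
  let S := selmx N j s in
  x - Xj *m invmx (S^T *m Xj) *m S^T *m x.

Fixpoint deim_rec N M (X : 'M[R]_(N, M)) (j : nat) : seq nat :=
  match j with
  | 0 => [::]
  | j'.+1 => let s := deim_rec X j' in
             rcons s (first_argmax (deim_residual X s j'))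
  end.

(* DEIM(X) = (s_1, ..., s_k) for X with k columns (indices 0-based) *)
Definition DEIM N k (X : 'M[R]_(N, k)) : seq nat := deim_rec X k.

Definition orthonormal_cols N M (X : 'M[R]_(N, M)) : Prop :=
  X^T *m X = 1%:M.

Definition is_svd p q r (G : 'M[R]_(p, q)) (W : 'M[R]_(p, r)) (s : 'rV[R]_r)
  (Z : 'M[R]_(q, r)) : Prop :=
  [/\ orthonormal_cols W, orthonormal_cols Z,
      (forall i : 'I_r, 0 <= s 0 i),
      (forall i j : 'I_r, (i <= j)%N -> s 0 j <= s 0 i)
    & G = W *m diag_mx s *m Z^T].

Definition is_pinv p q (B : 'M[R]_(p, q)) (X : 'M[R]_(q, p)) : Prop :=
  [/\ B *m X *m B = B, X *m B *m X = X,
      (B *m X)^T = B *m X & (X *m B)^T = X *m B].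

(* reduced GSVD of (A, B) as in the context; the ordering
   "gamma_i/sigma_i nonincreasing" is written cross-multiplied
   (sigma_i may be 0, meaning gamma_i/sigma_i = +oo). *)
Definition is_gsvd m d n (A : 'M[R]_(m, n)) (B : 'M[R]_(d, n))
  (U : 'M[R]_(m, n)) (V : 'M[R]_(d, n)) (Y : 'M[R]_n)
  (gam sig : 'rV[R]_n) : Prop :=
  [/\ orthonormal_cols U /\ orthonormal_cols V, Y \in unitmx,
      (forall i, [/\ (0 <= gam 0 i <= 1), (0 <= sig 0 i <= 1)
                 & (gam 0 i ^+ 2 + sig 0 i ^+ 2 = 1)]),
      (forall i j : 'I_n, (i <= j)%N -> gam 0 j * sig 0 i <= gam 0 i * sig 0 j)
    & A = U *m diag_mx gam *m Y^T /\ B = V *m diag_mx sig *m Y^T].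

(* gamma_1/sigma_1 > ... > gamma_k/sigma_k > gamma_{k+1}/sigma_{k+1}
   (cross-multiplied; 0-based indices i, i+1 with i < k) *)
Definition strict_top n (k : nat) (gam sig : 'rV[R]_n) : Prop :=
  forall i j : 'I_n, (i < k)%N -> j = i.+1 :> nat ->
    gam 0 j * sig 0 i < gam 0 i * sig 0 j.

End Defs.
Arguments selmx {R} N k s.

(* Main.v *)
Require Import Defs.
From mathcomp Require Import all_boot all_order all_algebra.
From mathcomp Require Import reals.
From mathcomp Require Import ring.
Set Implicit Arguments. Unset Strict Implicit. Unset Printing Implicit Defensive.
Import Order.TTheory GRing.Theory Num.Theory.
Local Open Scope ring_scope.

Section Aux.
Variable R : realType.

Lemma xentryE N M (X : 'M[R]_(N, M)) r c (H : (c < M)%N) :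
  xentry X r c = X r (Ordinal H).
Proof.
rewrite /xentry; case: insubP => [c' _ Hc|]; last by rewrite H.
by congr (X r _); apply/val_inj; rewrite /= Hc.
Qed.

Lemma xentry_out N M (X : 'M[R]_(N, M)) r c : (M <= c)%N -> xentry X r c = 0.
Proof. by move=> H; rewrite /xentry insubF // ltnNge H. Qed.

Lemma xentry_mul N M P (X : 'M[R]_(N, M)) (Y : 'M[R]_(M, P)) r c :
  xentry (X *m Y) r c = \sum_i X r i * xentry Y i c.
Proof.
rewrite /xentry; case: insubP => [c' _ _|_] /=; first by rewrite mxE.
by rewrite big1 // => i _; rewrite mulr0.
Qed.

Lemma first_cols_mul N M P k (X : 'M[R]_(N, M)) (Y : 'M[R]_(M, P)) :
  first_cols k (X *m Y) = X *m first_cols k Y.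
Proof.
apply/matrixP => r c; rewrite !mxE xentry_mul; apply: eq_bigr => i _.
by rewrite mxE.
Qed.

Lemma xentry_diag N M (X : 'M[R]_(N, M)) (d : 'rV[R]_M) r c :
  xentry (X *m diag_mx d) r c = xentry X r c * xentry d 0 c.
Proof.
rewrite /xentry; case: insubP => [c' _ _|_] /=; last by rewrite mulr0.
by rewrite mul_mx_diag mxE.
Qed.

Lemma first_cols_diag N M k (X : 'M[R]_(N, M)) (d : 'rV[R]_M) :
  first_cols k (X *m diag_mx d) =
  first_cols k X *m diag_mx (\row_(c < k) xentry d 0 c).
Proof.
apply/matrixP => r c; rewrite [in LHS]mxE xentry_diag mul_mx_diag !mxE.
by [].
Qed.

Lemma first_cols_orth N M k (X : 'M[R]_(N, M)) :
  (k <= M)%N -> orthonormal_cols X -> orthonormal_cols (first_cols k X).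
Proof.
rewrite /orthonormal_cols => Hk HX; apply/matrixP => i j.
have Hi : (i < M)%N by apply: leq_trans (ltn_ord i) Hk.
have Hj : (j < M)%N by apply: leq_trans (ltn_ord j) Hk.
have := congr1 (fun A : 'M[R]_M => A (Ordinal Hi) (Ordinal Hj)) HX.
rewrite !mxE /= => <-; apply: eq_bigr => l _.
by rewrite !mxE !(xentryE _ _ Hi) !(xentryE _ _ Hj).
Qed.

Lemma orth_inj N M (X : 'M[R]_(N, M)) :
  orthonormal_cols X -> forall c : 'cV[R]_M, X *m c = 0 -> c = 0.
Proof.
move=> HX c Hc; by rewrite -[c]mul1mx -HX -mulmxA Hc mulmx0.
Qed.

End Aux.


Section DEIMsec.
Variable R : realType.

Lemma first_argmax_nz N (v : 'cV[R]_N) : v != 0 ->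
  exists t : 'I_N, first_argmax v = t /\ v t 0 != 0.
Proof.
move=> Hv.
have [i0 Hi0] : exists i, v i 0 != 0.
  case: (boolP [exists i, v i 0 != 0]) => [/existsP [i Hi]|/existsPn H].
    by exists i.
  exfalso; move/eqP: Hv; apply; apply/matrixP => i j.
  by rewrite (ord1 j) mxE; apply/eqP; move: (H i); rewrite negbK.
set P := (fun i : 'I_N => [forall j : 'I_N, `|v j 0| <= `|v i 0|]).
have hasP : has P (enum 'I_N).
  apply/hasP; case: (@arg_maxP _ _ _ i0 xpredT (fun i => `|v i 0|)) => // m _ Hm.
  exists m; first by rewrite mem_enum.
  by apply/forallP => j; apply: Hm.
have Hlt : (first_argmax v < N)%N by rewrite -[X in (_ < X)%N]size_enum_ord -has_find.
exists (Ordinal Hlt); split => //.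
have := nth_find i0 hasP.
rewrite -/(first_argmax v) -[first_argmax v]/(nat_of_ord (Ordinal Hlt)) nth_ord_enum.
move/forallP/(_ i0) => Hle; rewrite -normr_gt0; apply: lt_le_trans Hle.
by rewrite normr_gt0.
Qed.

Lemma first_argmax_scale N (v : 'cV[R]_N) (a : R) : a != 0 ->
  first_argmax (a *: v) = first_argmax v.
Proof.
move=> Ha; rewrite /first_argmax; apply: eq_find => i /=.
apply: eq_forallb => j; rewrite !mxE !normrM ler_pM2l //.
by rewrite normr_gt0.
Qed.

Lemma det_schur n1 (A : 'M[R]_n1) (B : 'M_(n1, 1)) (C : 'M_(1, n1)) (D : 'M_1) :
  A \in unitmx -> \det (block_mx A B C D) = \det A * (D - C *m invmx A *m B) 0 0.
Proof.
move=> HA.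
have -> : block_mx A B C D =
  block_mx 1%:M 0 (C *m invmx A) 1%:M *m block_mx A B 0 (D - C *m invmx A *m B).
  rewrite mulmx_block !mul1mx !mul0mx !addr0 mulmxKV //.
  by rewrite addrC subrK.
rewrite (det_mulmx (block_mx 1%:M 0 (C *m invmx A) 1%:M)).
by rewrite det_lblock det_ublock !det1 !mul1r det_mx11.
Qed.

Variables (N K : nat) (X : 'M[R]_(N, K)).

Definition colj j : 'cV[R]_N := \matrix_(r < N, c < 1) xentry X r j.

Lemma size_deim j : size (deim_rec X j) = j.
Proof. by elim: j => //= j IH; rewrite size_rcons IH. Qed.

Lemma first_cols_S j : first_cols (j + 1) X = row_mx (first_cols j X) (colj j).
Proof.
apply/matrixP => r c; rewrite !mxE; case: splitP => [c' ->|c' ->]; rewrite !mxE //.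
by rewrite (ord1 c') addn0.
Qed.

Lemma selmx_rcons (s : seq nat) t j : size s = j ->
  selmx N (j + 1) (rcons s t) =
  row_mx (selmx N j s) (\matrix_(r < N, c < 1) ((nat_of_ord r == t)%:R : R)).
Proof.
move=> Hs; apply/matrixP => r c; rewrite !mxE; case: splitP => [c' ->|c' ->];
  rewrite !mxE nth_rcons Hs.
  by rewrite ltn_ord.
by rewrite (ord1 c') addn0 ltnn eqxx.
Qed.

Hypothesis Xinj : forall c : 'cV[R]_K, X *m c = 0 -> c = 0.

Lemma residual_nz s j : (j < K)%N ->
  deim_residual X s j != 0.
Proof.
move=> HjK; apply/eqP => Hr.
pose q := invmx ((selmx N j s)^T *m first_cols j X) *m (selmx N j s)^T *m colj j.
have Hres : deim_residual X s j = colj j - first_cols j X *m q.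
  by rewrite /deim_residual /q -!mulmxA.
pose ej : 'cV[R]_K := \col_i xentry (1%:M : 'M[R]_K) i j.
pose Ej : 'M[R]_(K, j) := first_cols j (1%:M : 'M[R]_K).
have Hx : colj j = X *m ej.
  apply/matrixP => r c; rewrite !mxE -{1}[X]mulmx1 xentry_mul.
  by apply: eq_bigr => i _; rewrite mxE.
have HXj : first_cols j X = X *m Ej by rewrite -first_cols_mul mulmx1.
have : X *m (ej - Ej *m q) = 0.
  by rewrite mulmxBr mulmxA -HXj -Hx -Hres Hr.
move/Xinj/matrixP/(_ (Ordinal HjK) 0)/eqP; rewrite !mxE (xentryE _ _ HjK) mxE eqxx.
rewrite big1 ?subr0 ?oner_eq0 // => l _; rewrite !mxE.
rewrite (xentryE _ _ (ltn_trans (ltn_ord l) HjK)) mxE -val_eqE /=.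
by rewrite (gtn_eqF (ltn_ord l)) mul0r.
Qed.

Lemma deim_unit j : (j <= K)%N ->
  (selmx N j (deim_rec X j))^T *m first_cols j X \in unitmx.
Proof.
elim: j => [_|j IH HjK].
  by rewrite unitmxE det_mx00 unitr1.
have HjK' : (j < K)%N by [].
have IH' := IH (ltnW HjK').
have [t [Ht Hrt]] := first_argmax_nz (residual_nz (deim_rec X j) HjK').
have key : (selmx N (j + 1) (deim_rec X j.+1))^T *m first_cols (j + 1) X \in unitmx.
  rewrite /= Ht (selmx_rcons _ (size_deim j)) first_cols_S tr_row_mx mul_col_row.
  rewrite unitmxE det_schur // unitfE mulf_neq0 //.
    by move: IH'; rewrite unitmxE unitfE.
  have -> : forall e : 'cV[R]_N, e^T *m colj j - e^T *m first_cols j X *m invmx ((selmx N j (deim_rec X j))^T *m first_cols j X)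
         *m ((selmx N j (deim_rec X j))^T *m colj j) = e^T *m deim_residual X (deim_rec X j) j.
    by move=> e; rewrite /deim_residual mulmxBr !mulmxA.
  have E1 : forall i : 'I_N, (\col_(r < N) ((nat_of_ord r == nat_of_ord t)%:R : R))^T 0 i
     = (nat_of_ord i == nat_of_ord t)%:R by move=> i; rewrite !mxE.
  rewrite mxE (bigD1 t) //= big1 ?addr0.
    by rewrite E1 eqxx mul1r.
  move=> i Hi; rewrite E1.
  by rewrite (_ : (nat_of_ord i == nat_of_ord t) = false) ?mul0r //; apply/negbTE.
by move: key; rewrite addn1.
Qed.

Lemma residual_scale (d : 'rV[R]_K) s j : (j < K)%N ->
  (forall i, d 0 i != 0) ->
  (selmx N j s)^T *m first_cols j X \in unitmx ->
  deim_residual (X *m diag_mx d) s j = xentry d 0 j *: deim_residual X s j.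
Proof.
move=> HjK Hd HM.
rewrite /deim_residual first_cols_diag.
set Xj := first_cols j X; set S := selmx N j s.
set D := diag_mx (\row_(c < j) xentry d 0 c).
have HD : D \in unitmx.
  rewrite unitmxE det_diag unitfE; apply/prodf_neq0 => i _; rewrite mxE.
  by rewrite (xentryE _ _ (ltn_trans (ltn_ord i) HjK)).
have Hx : (\matrix_(r < N, c < 1) xentry (X *m diag_mx d) r j) = xentry d 0 j *: colj j.
  by apply/matrixP => r c; rewrite !mxE xentry_diag mulrC.
rewrite Hx.
have HMD : S^T *m (Xj *m D) \in unitmx by rewrite mulmxA unitmx_mul HM HD.
have E1 : D *m invmx (S^T *m (Xj *m D)) = invmx (S^T *m Xj).
  have H1 : (S^T *m Xj) *m (D *m invmx (S^T *m (Xj *m D))) = 1%:M.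
    by rewrite mulmxA -(mulmxA S^T Xj D) mulmxV.
  by rewrite -[LHS](mulKmx HM) H1 mulmx1.
rewrite -[Xj *m D *m _]mulmxA E1 scalerBr -!scalemxAr.
by [].
Qed.

Lemma DEIM_scale (d : 'rV[R]_K) : (forall i, d 0 i != 0) ->
  DEIM (X *m diag_mx d) = DEIM X.
Proof.
move=> Hd; rewrite /DEIM.
suff H : forall j, (j <= K)%N -> deim_rec (X *m diag_mx d) j = deim_rec X j by apply: H.
elim=> [//|j IH HjK] /=.
rewrite IH ?(ltnW HjK) // residual_scale ?deim_unit ?(ltnW HjK) //.
rewrite first_argmax_scale // (xentryE _ _ HjK); exact: Hd.
Qed.

End DEIMsec.


Section SVD.
Variable R : realType.

Lemma sum_single n (F : 'I_n -> R) a : (forall b, b != a -> F b = 0) -> \sum_b F b = F a.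
Proof. by move=> H; rewrite (bigD1 a) //= big1 ?addr0 // => b /H. Qed.

Lemma entry_eq m n (A B : 'M[R]_(m, n)) i j : A = B -> A i j = B i j.
Proof. by move=> ->. Qed.

Lemma sq_inj (x y : R) : 0 <= x -> 0 <= y -> x * x = y * y -> x = y.
Proof.
move=> hx hy H; apply/eqP; rewrite -(@eqrXn2 _ 2) // !expr2; exact/eqP.
Qed.

Variables (p q n r k : nat) (G : 'M[R]_(p, q)) (U : 'M[R]_(p, n)) (lam : 'rV[R]_n)
  (V : 'M[R]_(q, n)) (W : 'M[R]_(p, r)) (s : 'rV[R]_r) (Z : 'M[R]_(q, r)).
Hypotheses (HU : is_svd G U lam V) (HW : is_svd G W s Z) (Hkr : (k <= r)%N)
  (Hkn : (k < n)%N)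
  (Hstr : forall i j : 'I_n, (i < k)%N -> j = i.+1 :> nat -> lam 0 j < lam 0 i).

Let C := U^T *m W.
Let E := V^T *m Z.

Lemma lam_ge0 a : 0 <= lam 0 a. Proof. by case: HU. Qed.
Lemma s_ge0 b : 0 <= s 0 b. Proof. by case: HW. Qed.

Lemma lam_gt (a b : 'I_n) : (a < b)%N -> (a < k)%N -> lam 0 b < lam 0 a.
Proof.
move=> Hab Hak; have Ha1 : (a.+1 < n)%N by apply: leq_ltn_trans Hkn.
have H1 := @Hstr a (Ordinal Ha1) Hak erefl.
have H2 : lam 0 b <= lam 0 (Ordinal Ha1).
  by case: HU => _ _ _ Hdec _; apply: (Hdec (Ordinal Ha1) b).
exact: le_lt_trans H2 H1.
Qed.

Lemma lam_pos (a : 'I_n) : (a < k)%N -> 0 < lam 0 a.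
Proof.
move=> Hak; have Ha1 : (a.+1 < n)%N by apply: leq_ltn_trans Hkn.
have H1 := @Hstr a (Ordinal Ha1) Hak erefl.
exact: le_lt_trans (lam_ge0 _) H1.
Qed.

Lemma lam_inj (a b : 'I_n) : (a < k)%N -> lam 0 b = lam 0 a -> b = a.
Proof.
move=> Hak Hba; case: (ltngtP a b) => [Hab|Hba'|/val_inj //].
  by move: (lam_gt Hab Hak); rewrite Hba ltxx.
by move: (lam_gt Hba' (ltn_trans Hba' Hak)); rewrite Hba ltxx.
Qed.

Lemma R1 : diag_mx lam *m E = C *m diag_mx s.
Proof.
case: HU => oU oV _ _ EG; case: HW => oW oZ _ _ EG2.
have H1 : U^T *m G = diag_mx lam *m V^T by rewrite EG !mulmxA oU mul1mx.
have H2 : G *m Z = W *m diag_mx s by rewrite EG2 -mulmxA oZ mulmx1.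
by rewrite /E /C mulmxA -H1 -mulmxA H2 mulmxA.
Qed.

Lemma R2 : diag_mx lam *m C = E *m diag_mx s.
Proof.
case: HU => oU oV _ _ EG; case: HW => oW oZ _ _ EG2.
have H1 : V^T *m G^T = diag_mx lam *m U^T.
  by rewrite EG !trmx_mul trmxK tr_diag_mx !mulmxA oV mul1mx.
have H2 : G^T *m W = Z *m diag_mx s.
  by rewrite EG2 !trmx_mul trmxK tr_diag_mx -!mulmxA oW mulmx1.
by rewrite /E /C mulmxA -H1 -mulmxA H2 mulmxA.
Qed.

Lemma Hce a b : C a b != 0 -> lam 0 a = s 0 b.
Proof.
move=> Hc.
have e1 : lam 0 a * E a b = C a b * s 0 b.
  by have := entry_eq a b R1; rewrite mul_diag_mx mul_mx_diag !mxE.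
have e2 : lam 0 a * C a b = E a b * s 0 b.
  by have := entry_eq a b R2; rewrite mul_diag_mx mul_mx_diag !mxE.
apply: sq_inj; rewrite ?lam_ge0 ?s_ge0 //.
apply: (mulIf Hc); by rewrite -mulrA e2 mulrA e1 -mulrA mulrC.
Qed.

Lemma Hcol b : s 0 b != 0 -> forall i, W i b = \sum_a U i a * C a b.
Proof.
case: HU => oU oV _ _ EG; case: HW => oW oZ _ _ EG2 Hs i.
have H2 : W *m diag_mx s = U *m (diag_mx lam *m E).
  by rewrite /E -[LHS]mulmx1 -oZ !mulmxA -EG2 EG.
have H3 : U *m C *m diag_mx s = W *m diag_mx s.
  by rewrite /C -!mulmxA H2 (mulmxA U^T U) oU mul1mx.
have := entry_eq i b H3; rewrite !mul_mx_diag !mxE => /(mulIf Hs) <-.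
by [].
Qed.

Lemma Hrow a : lam 0 a != 0 -> forall i, U i a = \sum_b W i b * C a b.
Proof.
case: HU => oU oV _ _ EG; case: HW => oW oZ _ _ EG2 Hs i.
have H2 : U *m diag_mx lam = W *m (diag_mx s *m (Z^T *m V)).
  by rewrite -[LHS]mulmx1 -oV !mulmxA -EG EG2 ?mulmxA.
have H3 : W *m C^T *m diag_mx lam = U *m diag_mx lam.
  by rewrite /C trmx_mul trmxK -!mulmxA H2 (mulmxA W^T W) oW mul1mx.
have := entry_eq i a H3; rewrite !mul_mx_diag !mxE => /(mulIf Hs) <-.
by apply: eq_bigr => b _; rewrite !mxE.
Qed.

Lemma Wcol_nz b : s 0 b != 0 -> exists a, C a b != 0.
Proof.
move=> Hs; case: (boolP [exists a, C a b != 0]) => [/existsP [a Ha]|/existsPn H].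
  by exists a.
exfalso; case: HW => oW _ _ _ _.
have := entry_eq b b oW; rewrite !mxE eqxx big1 => [/eqP|i _].
  by rewrite eq_sym oner_eq0.
rewrite !mxE (Hcol Hs) big1 ?mul0r // => a _.
by move: (H a); rewrite negbK => /eqP ->; rewrite mulr0.
Qed.

Lemma Urow_nz a : lam 0 a != 0 -> exists b, C a b != 0.
Proof.
move=> Hs; case: (boolP [exists b, C a b != 0]) => [/existsP [b Hb]|/existsPn H].
  by exists b.
exfalso; case: HU => oU _ _ _ _.
have := entry_eq a a oU; rewrite !mxE eqxx big1 => [/eqP|i _].
  by rewrite eq_sym oner_eq0.
rewrite !mxE (Hrow Hs) big1 ?mul0r // => b _.
by move: (H b); rewrite negbK => /eqP ->; rewrite mulr0.
Qed.


Lemma claim i : (i < k)%N -> forall (Hn : (i < n)%N) (Hr : (i < r)%N),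
  s 0 (Ordinal Hr) = lam 0 (Ordinal Hn) /\ (forall a : 'I_n, (nat_of_ord a != i) -> C a (Ordinal Hr) = 0).
Proof.
elim/ltn_ind: i => i IH Hik Hn Hr.
set i_n := Ordinal Hn; set i_r := Ordinal Hr.
have Hlpos : 0 < lam 0 i_n := @lam_pos i_n Hik.
have Hl0 : lam 0 i_n != 0 by rewrite gt_eqF.
have [b Hb] := Urow_nz Hl0.
have Hlb := Hce Hb.
have Hib : (i <= b)%N.
  rewrite leqNgt; apply/negP => Hbi.
  have Hbk : (b < k)%N := ltn_trans Hbi Hik.
  have Hbn : (b < n)%N := ltn_trans Hbk Hkn.
  have [Hsb _] := IH b Hbi Hbk Hbn (ltn_ord b).
  have Eb : Ordinal (ltn_ord b) = b by apply/val_inj.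
  rewrite Eb in Hsb.
  have := @lam_inj (Ordinal Hbn) i_n Hbk.
  rewrite Hlb Hsb => /(_ erefl) /(congr1 val) /= Hib.
  by move: Hbi; rewrite -Hib ltnn.
have Hsi : lam 0 i_n <= s 0 i_r.
  by rewrite Hlb; case: HW => _ _ _ Hdec _; apply: (Hdec i_r b).
have Hs0 : s 0 i_r != 0 by rewrite gt_eqF // (lt_le_trans Hlpos Hsi).
have [a Ha] := Wcol_nz Hs0.
have Hla := Hce Ha.
have Hai : (a <= i)%N.
  rewrite leqNgt; apply/negP => Hia.
  have := @lam_gt i_n a Hia Hik.
  by rewrite Hla ltNge Hsi.
have Hai' : nat_of_ord a = i.
  move: Hai; rewrite leq_eqVlt => /orP [/eqP //|Hai].
  exfalso.
  have Hak : (a < k)%N := ltn_trans Hai Hik.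
  have Har : (a < r)%N := ltn_trans Hai Hr.
  have [Hsa Hca] := IH a Hai Hak (ltn_ord a) Har.
  have Ea : Ordinal (ltn_ord a) = a by apply/val_inj.
  rewrite Ea in Hsa.
  set a_r := Ordinal Har.
  have Hsa0 : s 0 a_r != 0 by rewrite Hsa gt_eqF // lam_pos.
  have Caa : C a a_r != 0.
    have [a'' Ha''] := Wcol_nz Hsa0.
    case: (eqVneq (nat_of_ord a'') (nat_of_ord a)) => [Heq|Hne].
      by rewrite -(val_inj Heq).
    by move: Ha''; rewrite (Hca _ Hne) eqxx.
  have Wa : forall rho, W rho a_r = U rho a * C a a_r.
    move=> rho; rewrite (Hcol Hsa0) (sum_single (a := a)) // => b' Hb'.
    by rewrite Hca ?mulr0 //.
  have Wi : forall rho, W rho i_r = U rho a * C a i_r.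
    move=> rho; rewrite (Hcol Hs0) (sum_single (a := a)) // => b' Hb'.
    case: (eqVneq (C b' i_r) 0) => [->|Hc]; first by rewrite mulr0.
    have := Hce Hc; rewrite -Hla => /(@lam_inj a b' Hak) Hb''.
    by move: Hb'; rewrite Hb'' eqxx.
  case: HW => oW _ _ _ _; case: HU => oU _ _ _ _.
  have := entry_eq a_r i_r oW.
  rewrite !mxE.
  have -> : (a_r == i_r) = false.
    by apply/negbTE; rewrite -val_eqE /= neq_ltn Hai.
  have -> : \sum_j W^T a_r j * W j i_r = C a a_r * C a i_r.
    have HUa : \sum_j U^T a j * U j a = 1.
      by have := entry_eq a a oU; rewrite !mxE eqxx.
    rewrite -[RHS]mulr1 -HUa mulr_sumr; apply: eq_bigr => rho _.
    rewrite [W^T _ _]mxE [U^T _ _]mxE Wa Wi; ring.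
  by move=> H; move: (mulf_neq0 Caa Ha); rewrite H mulr0n eqxx.
have Eai : a = i_n by apply/val_inj.
split; first by rewrite -Hla Eai.
move=> a' Ha'; case: (eqVneq (C a' i_r) 0) => // Hc.
have := Hce Hc; rewrite -Hla Eai => /(@lam_inj i_n a' Hik) Ha''.
by move: Ha'; rewrite Ha'' eqxx.
Qed.

Lemma claim2 (i_n : 'I_n) (i_r : 'I_r) : nat_of_ord i_n = nat_of_ord i_r -> (i_n < k)%N ->
  s 0 i_r = lam 0 i_n /\ (forall a : 'I_n, (nat_of_ord a != nat_of_ord i_n) -> C a i_r = 0).
Proof.
move=> Heq Hk; have Hr : (i_n < r)%N by rewrite Heq.
have [Hs Hc] := claim Hk (ltn_ord i_n) Hr.
have E1 : Ordinal (ltn_ord i_n) = i_n by apply/val_inj.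
have E2 : Ordinal Hr = i_r by apply/val_inj.
rewrite E1 E2 in Hs Hc; split => // a Ha; apply: Hc; by rewrite -Heq.
Qed.

Lemma svd_cols : exists2 c : 'rV[R]_k, (forall i, c 0 i != 0) &
  first_cols k W = first_cols k U *m diag_mx c.
Proof.
have Hkn' := ltnW Hkn.
have key : forall i : 'I_k, C (widen_ord Hkn' i) (widen_ord Hkr i) != 0 /\ forall rho, W rho (widen_ord Hkr i) = U rho (widen_ord Hkn' i) * C (widen_ord Hkn' i) (widen_ord Hkr i).
  move=> i.
  have [Hs Hc] := @claim2 (widen_ord Hkn' i) (widen_ord Hkr i) erefl (ltn_ord i).
  have Hs0 : s 0 (widen_ord Hkr i) != 0.
    by rewrite Hs gt_eqF // (@lam_pos (widen_ord Hkn' i) (ltn_ord i)).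
  split.
    have [a Ha] := Wcol_nz Hs0.
    case: (eqVneq (nat_of_ord a) (nat_of_ord i)) => [Heq|Hne].
      by rewrite -(_ : a = widen_ord Hkn' i) //; apply/val_inj.
    by move: Ha; rewrite (Hc _ Hne) eqxx.
  move=> rho; rewrite (Hcol Hs0) (sum_single (a := widen_ord Hkn' i)) // => b' Hb'.
  by rewrite Hc ?mulr0.
exists (\row_(i < k) C (widen_ord Hkn' i) (widen_ord Hkr i)).
  by move=> i; rewrite mxE; case: (key i).
apply/matrixP => rho i; rewrite mul_mx_diag !mxE.
rewrite (xentryE _ _ (leq_trans (ltn_ord i) Hkr)) (xentryE _ _ (leq_trans (ltn_ord i) Hkn')).
have -> : Ordinal (leq_trans (ltn_ord i) Hkr) = widen_ord Hkr i by apply/val_inj.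
have -> : Ordinal (leq_trans (ltn_ord i) Hkn') = widen_ord Hkn' i by apply/val_inj.
case: (key i) => _ ->; congr (_ * _); by rewrite /C mxE.
Qed.

End SVD.


Section Final.
Variable R : realType.

Lemma diag_mulE n (a b : 'rV[R]_n) :
  diag_mx a *m diag_mx b = diag_mx (\row_i (a 0 i * b 0 i)).
Proof.
rewrite mul_diag_mx; apply/matrixP => i j; rewrite !mxE.
case: (eqVneq i j) => [->|Hij]; first by rewrite !mulr1n.
by rewrite !mulr0n mulr0.
Qed.

Lemma diag_unit n (a : 'rV[R]_n) : (forall i, a 0 i != 0) -> diag_mx a \in unitmx.
Proof.
by move=> H; rewrite unitmxE det_diag unitfE; apply/prodf_neq0 => i _.
Qed.

Lemma sig_pos_rank d n (V : 'M[R]_(d, n)) (sig : 'rV[R]_n) (Y : 'M[R]_n) :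
  (forall i, 0 <= sig 0 i) -> \rank (V *m diag_mx sig *m Y^T) = n ->
  forall i, 0 < sig 0 i.
Proof.
move=> Hge Hr i; rewrite lt_def Hge andbT; apply/negP => /eqP Hi.
have Hdu : diag_mx sig \notin unitmx.
  rewrite unitmxE det_diag unitfE (bigD1 i) //= Hi mul0r eqxx //.
have : (\rank (diag_mx sig) < n)%N.
  rewrite ltn_neqAle rank_leq_row andbT.
  by move: Hdu; rewrite -row_free_unit.
rewrite ltnNge -{1}Hr; move/negP; apply.
exact: leq_trans (mxrankM_maxl _ _) (mxrankM_maxr _ _).
Qed.

Lemma pinv_eq d n (V : 'M[R]_(d, n)) (T : 'M[R]_n) (Bp : 'M[R]_(n, d)) :
  V^T *m V = 1%:M -> T \in unitmx -> is_pinv (V *m T) Bp ->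
  Bp = invmx T *m V^T.
Proof.
move=> oV HT [H1 H2 H3 H4].
have HBV : Bp *m V = invmx T.
  have E1 : T *m (Bp *m V) *m T = T.
    have := congr1 (mulmx V^T) H1.
    by rewrite !mulmxA oV !mul1mx -!mulmxA.
  have := congr1 (fun M => invmx T *m M *m invmx T) E1.
  by rewrite /= !mulmxA mulVmx // !mul1mx mulmxK.
have E2 : Bp = Bp *m Bp^T *m T^T *m V^T.
  by rewrite -{1}H2 -mulmxA -H3 !trmx_mul !mulmxA.
have HBV2 : Bp *m V = Bp *m Bp^T *m T^T by rewrite {1}E2 -mulmxA oV mulmx1.
by rewrite {1}E2 -HBV HBV2.
Qed.

Lemma svd_tr p q n (G : 'M[R]_(p, q)) U (l : 'rV[R]_n) V :
  is_svd G U l V -> is_svd G^T V l U.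
Proof.
case=> oU oV H1 H2 EG; split => //.
by rewrite EG !trmx_mul trmxK tr_diag_mx !mulmxA.
Qed.

Lemma orth1 n : orthonormal_cols (1%:M : 'M[R]_n).
Proof. by rewrite /orthonormal_cols trmx1 mulmx1. Qed.

Lemma unit_cols_inj n k (Y : 'M[R]_n) : (k <= n)%N -> Y \in unitmx ->
  forall c : 'cV[R]_k, first_cols k Y *m c = 0 -> c = 0.
Proof.
move=> Hk HY c; rewrite -[Y]mulmx1 first_cols_mul -mulmxA => H.
apply: (orth_inj (first_cols_orth Hk (@orth1 n))).
by rewrite -(mulKmx HY (_ *m c)) H mulmx0.
Qed.

Lemma ratio_le (a b c e : R) : 0 < b -> 0 < e -> a * b <= c * e -> a / e <= c / b.
Proof.
move=> Hb He H; rewrite ler_pdivrMr // mulrAC ler_pdivlMr //.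
Qed.

Lemma ratio_lt (a b c e : R) : 0 < b -> 0 < e -> a * b < c * e -> a / e < c / b.
Proof.
move=> Hb He H; rewrite ltr_pdivrMr // mulrAC ltr_pdivlMr //.
Qed.

End Final.


Unset Implicit Arguments.

Lemma gsvd_A (R : realType) m n (A : 'M[R]_(m, n)) U (gam sig : 'rV[R]_n) (Y : 'M[R]_n) :
  (forall i, 0 < sig 0 i) -> A = U *m diag_mx gam *m Y^T ->
  A = U *m diag_mx (\row_i (gam 0 i / sig 0 i)) *m (diag_mx sig *m Y^T).
Proof.
move=> Hs ->; rewrite mulmxA -(mulmxA U _ (diag_mx sig)) diag_mulE; congr (_ *m _ *m _).
congr diag_mx; apply/matrixP => i j; rewrite (ord1 i) !mxE divfK //.
by rewrite gt_eqF.
Qed.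

Lemma svd_ratio (R : realType) p q n (G : 'M[R]_(p, q)) U V (gam sig : 'rV[R]_n) :
  (forall i, 0 < sig 0 i) -> (forall i, 0 <= gam 0 i) ->
  (forall i j : 'I_n, (i <= j)%N -> gam 0 j * sig 0 i <= gam 0 i * sig 0 j) ->
  orthonormal_cols U -> orthonormal_cols V ->
  G = U *m diag_mx (\row_i (gam 0 i / sig 0 i)) *m V^T ->
  is_svd G U (\row_i (gam 0 i / sig 0 i)) V.
Proof.
move=> Hs Hg Hord oU oV EG; split => //.
  by move=> i; rewrite mxE divr_ge0 // ltW.
by move=> i j Hij; rewrite !mxE; apply: ratio_le; rewrite ?Hs ?Hord.
Qed.

Theorem mainTheorem2 (R : realType) :
  (* part (i) *)
  (forall (m d n k : nat) (A : 'M[R]_(m, n)) (B : 'M[R]_(d, n))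
     (U : 'M[R]_(m, n)) (V : 'M[R]_(d, n)) (Y : 'M[R]_n) (gam sig : 'rV[R]_n)
     (Bp : 'M[R]_(n, d)),
     (n <= m)%N -> (n <= d)%N -> \rank B = n ->
     is_gsvd A B U V Y gam sig ->
     (1 <= k)%N -> (k < n)%N -> strict_top k gam sig ->
     is_pinv B Bp ->
     let G := A *m Bp in
     [/\ (forall i : 'I_n, 0 < sig 0 i),
         is_svd G U (\row_i (gam 0 i / sig 0 i)) V,
         (forall r (W : 'M[R]_(m, r)) (s : 'rV[R]_r) (Z : 'M[R]_(d, r)),
            (k <= r)%N -> is_svd G W s Z ->
            DEIM (first_cols k W) = DEIM (first_cols k U))
       & (forall r (W : 'M[R]_(m, r)) (s : 'rV[R]_r) (Z : 'M[R]_(d, r)),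
            (k <= r)%N -> is_svd G W s Z ->
            DEIM (first_cols k Z) = DEIM (first_cols k V))]) /\
  (* part (ii): d = n and B = I_n *)
  (forall (m n k : nat) (A : 'M[R]_(m, n))
     (U : 'M[R]_(m, n)) (V : 'M[R]_n) (Y : 'M[R]_n) (gam sig : 'rV[R]_n),
     (n <= m)%N ->
     is_gsvd A (1%:M : 'M[R]_n) U V Y gam sig ->
     (1 <= k)%N -> (k < n)%N -> strict_top k gam sig ->
     let sA := DEIM (first_cols k U) in
     let p := DEIM (first_cols k Y) in
     forall r (W : 'M[R]_(m, r)) (s : 'rV[R]_r) (Z : 'M[R]_(n, r)),
       (k <= r)%N -> is_svd A W s Z ->
       [/\ DEIM (first_cols k W) = sA,
           DEIM (first_cols k Z) = p,
           A *m selmx n k (DEIM (first_cols k Z)) = A *m selmx n k p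
         & (selmx m k (DEIM (first_cols k W)))^T *m A = (selmx m k sA)^T *m A]).
Proof.
split.
- move=> m d n k A B U V Y gam sig Bp Hm Hd Hrank Hg Hk1 Hkn Hstr Hp G.
  case: Hg => [[oU oV] HY Hgs Hord [EA EB]].
  have Hsig0 : forall i, 0 <= sig 0 i by move=> i; case: (Hgs i) => _ /andP[].
  have Hgam0 : forall i, 0 <= gam 0 i by move=> i; case: (Hgs i) => /andP[].
  have Hsp : forall i, 0 < sig 0 i.
    by apply: (sig_pos_rank (V:=V) (Y:=Y)) => //; rewrite -EB.
  set lamv := \row_i (gam 0 i / sig 0 i).
  set T := diag_mx sig *m Y^T.
  have HT : T \in unitmx.
    rewrite unitmx_mul diag_unit ?unitmx_tr // => i; by rewrite gt_eqF.
  have EA' : A = U *m diag_mx lamv *m T by apply: gsvd_A.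
  have EBp : Bp = invmx T *m V^T.
    by apply: pinv_eq => //; rewrite /T mulmxA -EB.
  have EG : G = U *m diag_mx lamv *m V^T.
    by rewrite /G EA' EBp mulmxA mulmxK.
  have Hsvd : is_svd G U lamv V by apply: svd_ratio.
  have Hstr' : forall i j : 'I_n, (i < k)%N -> j = i.+1 :> nat -> lamv 0 j < lamv 0 i.
    by move=> i j Hi Hj; rewrite !mxE ratio_lt // Hstr.
  split => //.
    move=> r W s Z Hkr HW.
    have [c Hc ->] := svd_cols Hsvd HW Hkr Hkn Hstr'.
    apply: DEIM_scale Hc.
    exact: orth_inj (first_cols_orth (ltnW Hkn) oU).
  move=> r W s Z Hkr HW.
  have [c Hc ->] := svd_cols (svd_tr Hsvd) (svd_tr HW) Hkr Hkn Hstr'.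
  apply: DEIM_scale Hc.
  exact: orth_inj (first_cols_orth (ltnW Hkn) oV).
- move=> m n k A U V Y gam sig Hm Hg Hk1 Hkn Hstr sA p r W s Z Hkr HA.
  case: Hg => [[oU oV] HY Hgs Hord [EA EB]].
  have Hsig0 : forall i, 0 <= sig 0 i by move=> i; case: (Hgs i) => _ /andP[].
  have Hgam0 : forall i, 0 <= gam 0 i by move=> i; case: (Hgs i) => /andP[].
  have Hsp : forall i, 0 < sig 0 i.
    by apply: (sig_pos_rank (V:=V) (Y:=Y)) => //; rewrite -EB mxrank1.
  set lamv := \row_i (gam 0 i / sig 0 i).
  set T := diag_mx sig *m Y^T.
  have EA' : A = U *m diag_mx lamv *m T by apply: gsvd_A.
  have EVT : V^T = T.
    by rewrite -[V^T]mulmx1 EB /T !mulmxA oV mul1mx.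
  have Hsvd : is_svd A U lamv V by apply: svd_ratio => //; rewrite -EVT in EA'.
  have Hstr' : forall i j : 'I_n, (i < k)%N -> j = i.+1 :> nat -> lamv 0 j < lamv 0 i.
    by move=> i j Hi Hj; rewrite !mxE ratio_lt // Hstr.
  have H1 : DEIM (first_cols k W) = sA.
    have [c Hc ->] := svd_cols Hsvd HA Hkr Hkn Hstr'.
    apply: DEIM_scale Hc.
    exact: orth_inj (first_cols_orth (ltnW Hkn) oU).
  have H2 : DEIM (first_cols k Z) = p.
    have [c Hc ->] := svd_cols (svd_tr Hsvd) (svd_tr HA) Hkr Hkn Hstr'.
    have EV : V = Y *m diag_mx sig.
      by rewrite -[V]trmxK EVT /T trmx_mul trmxK tr_diag_mx.
    rewrite EV first_cols_diag -mulmxA diag_mulE.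
    apply: DEIM_scale.
      exact: unit_cols_inj (ltnW Hkn) HY.
    move=> i; rewrite !mxE mulf_neq0 //.
    by rewrite (xentryE _ _ (ltn_trans (ltn_ord i) Hkn)) gt_eqF.
  by split; rewrite ?H1 ?H2.
Qed.
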